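(* Let $n\ge3$, $\mathcal H=(\mathbb C^2)^{\otimes n}$, with nearest-neighbor neighborhoods $\mathcal N_k=\{k,k+1\}$, $k=1,\dots,n-1$. Let $D=|00\rangle\langle10|+|11\rangle\langle01|$ on $\mathbb C^2\otimes\mathbb C^2$ and $D_k=D$ acting on qubits $k,k+1$ tensored with the identity on the others. Let $\mathcal H'$ be the $+1$-eigenspace of $\sigma_x^{\otimes n}$ (of dimension $2^{n-1}$). Then for every density operator $\rho_0$ supported in $\mathcal H'$, $e^{\mathcal L(0,\{D_k\})t}(\rho_0)\to|\Psi_{\mathrm{GHZ}}\rangle\langle\Psi_{\mathrm{GHZ}}|$ as $t\to\infty$, where $|\Psi_{\mathrm{GHZ}}\rangle=(|0\rangle^{\otimes n}+|1\rangle^{\otimes n})/\sqrt2$; i.e. the GHZ state is $\mathcal H'$-DQLS.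
   Context: $\sigma_x$ is the Pauli $x$ matrix; $\{|0\rangle,|1\rangle\}$ is the computational basis. $\mathcal L(0,\{D_k\})(\rho)=\sum_k(D_k\rho D_k^\dagger-\frac12\{D_k^\dagger D_k,\rho\})$. *)

(* Defs.v *)
From Stdlib Require Import Reals Lra Arith ClassicalEpsilon.
Open Scope R_scope.

Record C := mkC { Re : R ; Im : R }.
Definition C0 : C := mkC 0 0.
Definition C1 : C := mkC 1 0.
Definition RtoC (r : R) : C := mkC r 0.
Definition Cadd (x y : C) : C := mkC (Re x + Re y) (Im x + Im y).
Definition Copp (x : C) : C := mkC (- Re x) (- Im x).
Definition Cmul (x y : C) : C :=
  mkC (Re x * Re y - Im x * Im y) (Re x * Im y + Im x * Re y).
Definition Cconj (x : C) : C := mkC (Re x) (- Im x).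
Definition Cmod (x : C) : R := sqrt (Re x ^ 2 + Im x ^ 2).

Fixpoint Csum (N : nat) (f : nat -> C) : C :=
  match N with O => C0 | S m => Cadd (Csum m f) (f m) end.

(** Vectors and matrices: entries indexed by nat; only indices < dimension
    are meaningful. *)
Definition Vec := nat -> C.
Definition Mat := nat -> nat -> C.
Definition Mzero : Mat := fun _ _ => C0.
Definition Mplus (A B : Mat) : Mat := fun i j => Cadd (A i j) (B i j).
Definition Mscale (c : C) (A : Mat) : Mat := fun i j => Cmul c (A i j).
Definition Mmul (N : nat) (A B : Mat) : Mat :=
  fun i j => Csum N (fun k => Cmul (A i k) (B k j)).
Definition Madj (A : Mat) : Mat := fun i j => Cconj (A j i).
Definition Id : Mat := fun i j => if Nat.eqb i j then C1 else C0.

(** Kronecker product A (x) B where B has dimension p. *)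
Definition kron (p : nat) (A B : Mat) : Mat :=
  fun i j => Cmul (A (i / p)%nat (j / p)%nat) (B (i mod p)%nat (j mod p)%nat).

Definition basis (k : nat) : Vec := fun i => if Nat.eqb i k then C1 else C0.
Definition outer (u v : Vec) : Mat := fun i j => Cmul (u i) (Cconj (v j)).

(** Two-qubit basis: |ab> has index 2a+b.
    D = |00><10| + |11><01|  *)
Definition Dop : Mat := Mplus (outer (basis 0) (basis 2)) (outer (basis 3) (basis 1)).

(** D_k : D on qubits k, k+1 (k = 1..n-1, qubit 1 = most significant),
    identity elsewhere: Id_{2^(k-1)} (x) D (x) Id_{2^(n-k-1)} *)
Definition Dk (n k : nat) : Mat := kron (2 ^ (n - k - 1)) (kron 4 Id Dop) Id.

Definition sigmax : Mat := Mplus (outer (basis 0) (basis 1)) (outer (basis 1) (basis 0)).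
Fixpoint Xn (n : nat) : Mat :=
  match n with
  | O => outer (basis 0) (basis 0)
  | S m => kron (2 ^ m) sigmax (Xn m)
  end.

Definition dissip (N : nat) (L rho : Mat) : Mat :=
  Mplus (Mmul N (Mmul N L rho) (Madj L))
        (Mscale (RtoC (- / 2))
           (Mplus (Mmul N (Mmul N (Madj L) L) rho) (Mmul N rho (Mmul N (Madj L) L)))).

Fixpoint Msum1 (K : nat) (f : nat -> Mat) : Mat :=
  match K with O => Mzero | S m => Mplus (Msum1 m f) (f (S m)) end.

(** The Lindbladian L(0,{D_k}) on n qubits (zero Hamiltonian). *)
Definition Lind (n : nat) (rho : Mat) : Mat :=
  Msum1 (n - 1) (fun k => dissip (2 ^ n) (Dk n k) rho).

Fixpoint Lpow (n m : nat) (rho : Mat) : Mat :=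
  match m with O => rho | S m' => Lind n (Lpow n m' rho) end.

Definition Rlim (u : nat -> R) : R := epsilon (inhabits 0) (fun l => Un_cv u l).

(** e^{L t}(rho0) = sum_m t^m/m! L^m(rho0), entrywise. *)
Definition evol (n : nat) (t : R) (rho0 : Mat) : Mat :=
  fun i j =>
    mkC (Rlim (fun M => sum_f_R0 (fun m => t ^ m / INR (fact m) * Re (Lpow n m rho0 i j)) M))
        (Rlim (fun M => sum_f_R0 (fun m => t ^ m / INR (fact m) * Im (Lpow n m rho0 i j)) M)).

Definition is_density (N : nat) (rho : Mat) : Prop :=
  (forall i j, (i < N)%nat -> (j < N)%nat -> rho i j = Cconj (rho j i)) /\
  (forall v : Vec,
     0 <= Re (Csum N (fun i => Csum N (fun j => Cmul (Cconj (v i)) (Cmul (rho i j) (v j)))))) /\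
  Csum N (fun i => rho i i) = C1.

(** rho is supported in the +1 eigenspace of sigma_x^{(x) n}:
    every column of rho (hence its range) is fixed by sigma_x^{(x) n}. *)
Definition supported_in_Hprime (n : nat) (rho : Mat) : Prop :=
  forall i j, (i < 2 ^ n)%nat -> (j < 2 ^ n)%nat -> Mmul (2 ^ n) (Xn n) rho i j = rho i j.

Definition psiGHZ (n : nat) : Vec :=
  fun i => if orb (Nat.eqb i 0) (Nat.eqb i (2 ^ n - 1)) then RtoC (/ sqrt 2) else C0.
Definition GHZ (n : nat) : Mat := outer (psiGHZ n) (psiGHZ n).

(* Main.v *)
From Stdlib Require Import Reals Lra Lia Arith Bool ClassicalEpsilon.
From Coquelicot Require Import Rcomplements Rbar Hierarchy Lim_seq Series PSeries Derive Continuity Lub AutoDerive.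
From Coquelicot Require ElemFct.
Require Import Defs.
Open Scope R_scope.

Lemma Ceq : forall x y : C, Re x = Re y -> Im x = Im y -> x = y.
Proof. intros [a b] [c d]; simpl; intros -> ->; reflexivity. Qed.

Lemma Cmul_1_l x : Cmul C1 x = x. Proof. apply Ceq; simpl; ring. Qed.
Lemma Cmul_1_r x : Cmul x C1 = x. Proof. apply Ceq; simpl; ring. Qed.
Lemma Cmul_0_l x : Cmul C0 x = C0. Proof. apply Ceq; simpl; ring. Qed.
Lemma Cmul_0_r x : Cmul x C0 = C0. Proof. apply Ceq; simpl; ring. Qed.
Lemma Cadd_0_l x : Cadd C0 x = x. Proof. apply Ceq; simpl; ring. Qed.
Lemma Cadd_0_r x : Cadd x C0 = x. Proof. apply Ceq; simpl; ring. Qed.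
Lemma Cconj_1 : Cconj C1 = C1. Proof. apply Ceq; simpl; ring. Qed.
Lemma Cconj_0 : Cconj C0 = C0. Proof. apply Ceq; simpl; ring. Qed.
Lemma Cconj_conj x : Cconj (Cconj x) = x. Proof. apply Ceq; simpl; ring. Qed.

Definition ind (b : bool) : C := if b then C1 else C0.

Lemma Cmul_ind_l b x : Cmul (ind b) x = if b then x else C0.
Proof. destruct b; simpl; [apply Cmul_1_l | apply Cmul_0_l]. Qed.
Lemma Cmul_ind_r b x : Cmul x (ind b) = if b then x else C0.
Proof. destruct b; simpl; [apply Cmul_1_r | apply Cmul_0_r]. Qed.
Lemma Cconj_ind b : Cconj (ind b) = ind b.
Proof. destruct b; simpl; [apply Cconj_1 | apply Cconj_0]. Qed.

Lemma Csum_ext N f g : (forall i, (i < N)%nat -> f i = g i) -> Csum N f = Csum N g.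
Proof.
  induction N; intros H; simpl; auto.
  rewrite IHN by (intros; apply H; lia). rewrite H by lia. auto.
Qed.

Lemma Csum_zero N f : (forall i, (i < N)%nat -> f i = C0) -> Csum N f = C0.
Proof.
  induction N; intros H; simpl; auto.
  rewrite IHN by (intros; apply H; lia). rewrite H by lia. apply Cadd_0_l.
Qed.

Lemma Csum_single N f p : (p < N)%nat -> (forall i, (i < N)%nat -> i <> p -> f i = C0) ->
  Csum N f = f p.
Proof.
  induction N; intros Hp H; [lia|]. simpl.
  destruct (Nat.eq_dec p N) as [->|Hne].
  - rewrite Csum_zero by (intros; apply H; lia). apply Cadd_0_l.
  - rewrite IHN by (try lia; intros; apply H; lia). rewrite (H N) by lia. apply Cadd_0_r.
Qed.

Fixpoint rsum (N : nat) (f : nat -> R) : R :=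
  match N with O => 0 | S m => rsum m f + f m end.

Lemma Re_Csum N f : Re (Csum N f) = rsum N (fun i => Re (f i)).
Proof. induction N; simpl; auto. rewrite IHN; auto. Qed.
Lemma Im_Csum N f : Im (Csum N f) = rsum N (fun i => Im (f i)).
Proof. induction N; simpl; auto. rewrite IHN; auto. Qed.

Lemma rsum_ext N f g : (forall i, (i < N)%nat -> f i = g i) -> rsum N f = rsum N g.
Proof.
  induction N; intros H; simpl; auto.
  rewrite IHN by (intros; apply H; lia). rewrite H by lia. auto.
Qed.
Lemma rsum_zero N f : (forall i, (i < N)%nat -> f i = 0) -> rsum N f = 0.
Proof.
  induction N; intros H; simpl; auto.
  rewrite IHN by (intros; apply H; lia). rewrite H by lia. ring.
Qed.
Lemma rsum_single N f p : (p < N)%nat -> (forall i, (i < N)%nat -> i <> p -> f i = 0) ->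
  rsum N f = f p.
Proof.
  induction N; intros Hp H; [lia|]. simpl.
  destruct (Nat.eq_dec p N) as [->|Hne].
  - rewrite rsum_zero by (intros; apply H; lia). ring.
  - rewrite IHN by (try lia; intros; apply H; lia). rewrite (H N) by lia. ring.
Qed.
Lemma rsum_plus N f g : rsum N (fun i => f i + g i) = rsum N f + rsum N g.
Proof. induction N; simpl; [ring|]. rewrite IHN; ring. Qed.
Lemma rsum_minus N f g : rsum N (fun i => f i - g i) = rsum N f - rsum N g.
Proof. induction N; simpl; [ring|]. rewrite IHN; ring. Qed.
Lemma rsum_scal N c f : rsum N (fun i => c * f i) = c * rsum N f.
Proof. induction N; simpl; [ring|]. rewrite IHN; ring. Qed.
Lemma rsum_swap N M (f : nat -> nat -> R) :
  rsum N (fun i => rsum M (fun j => f i j)) = rsum M (fun j => rsum N (fun i => f i j)).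
Proof.
  induction N; simpl.
  - symmetry; apply rsum_zero; auto.
  - rewrite IHN. rewrite <- rsum_plus. auto.
Qed.
Lemma rsum_le N f g : (forall i, (i < N)%nat -> f i <= g i) -> rsum N f <= rsum N g.
Proof.
  induction N; intros H; simpl; [lra|].
  apply Rplus_le_compat; [apply IHN; intros; apply H; lia | apply H; lia].
Qed.
Lemma rsum_nonneg N f : (forall i, (i < N)%nat -> 0 <= f i) -> 0 <= rsum N f.
Proof.
  intros H. replace 0 with (rsum N (fun _ => 0)) by (apply rsum_zero; auto).
  apply rsum_le; auto.
Qed.
Lemma rsum_abs N f : Rabs (rsum N f) <= rsum N (fun i => Rabs (f i)).
Proof.
  induction N; simpl. rewrite Rabs_R0; lra.
  eapply Rle_trans; [apply Rabs_triang|]. lra.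
Qed.
Lemma rsum_const N c : rsum N (fun _ => c) = INR N * c.
Proof. induction N; simpl rsum; [simpl; ring|]. rewrite IHN, S_INR; ring. Qed.
Lemma rsum_term_le N f p : (p < N)%nat -> (forall i, (i < N)%nat -> 0 <= f i) -> f p <= rsum N f.
Proof.
  induction N; intros Hp H; [lia|]. simpl.
  destruct (Nat.eq_dec p N) as [->|Hne].
  - pose proof (rsum_nonneg N f ltac:(intros; apply H; lia)); lra.
  - pose proof (IHN ltac:(lia) ltac:(intros; apply H; lia)). pose proof (H N ltac:(lia)); lra.
Qed.

Definition wb (n k i : nat) : bool := xorb (Nat.testbit i (n-k)) (Nat.testbit i (n-k-1)).
Definition fl (n k i : nat) : nat := Nat.lxor i (2^(n-k)).
Definition comp (n i : nat) : nat := (2^n - 1 - i)%nat.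

Lemma pow2_pos n : (0 < 2 ^ n)%nat.
Proof. apply Nat.neq_0_lt_0, Nat.pow_nonzero; lia. Qed.

Lemma lt_pow2_bits n i : (i < 2^n)%nat -> forall p, (n <= p)%nat -> Nat.testbit i p = false.
Proof.
  intros Hi p Hp. rewrite <- (Nat.mod_small i (2^n)) by auto.
  apply Nat.mod_pow2_bits_high; auto.
Qed.

Lemma bits_lt_pow2 n i : (forall p, (n <= p)%nat -> Nat.testbit i p = false) -> (i < 2^n)%nat.
Proof.
  intros H. assert (E : i = i mod 2^n).
  { apply Nat.bits_inj_iff. intros p. destruct (Nat.lt_ge_cases p n).
    - rewrite Nat.mod_pow2_bits_low; auto.
    - rewrite Nat.mod_pow2_bits_high; auto. }
  rewrite E. apply Nat.mod_upper_bound. pose proof (pow2_pos n); lia.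
Qed.

Lemma fl_lt n k i : (1 <= k)%nat -> (k < n)%nat -> (i < 2^n)%nat -> (fl n k i < 2^n)%nat.
Proof.
  intros Hk Hkn Hi. apply bits_lt_pow2. intros p Hp. unfold fl.
  rewrite Nat.lxor_spec, (lt_pow2_bits n i Hi p Hp), Nat.pow2_bits_eqb.
  simpl. apply Nat.eqb_neq. lia.
Qed.

Lemma fl_fl n k i : fl n k (fl n k i) = i.
Proof. unfold fl. rewrite Nat.lxor_assoc, Nat.lxor_nilpotent, Nat.lxor_0_r. auto. Qed.

Lemma wb_fl n k i : (k < n)%nat -> wb n k (fl n k i) = negb (wb n k i).
Proof.
  intros Hk. unfold wb, fl. rewrite !Nat.lxor_spec, !Nat.pow2_bits_eqb.
  rewrite Nat.eqb_refl. replace (n - k =? n - k - 1)%nat with false by (symmetry; apply Nat.eqb_neq; lia).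
  destruct (Nat.testbit i (n-k)), (Nat.testbit i (n-k-1)); auto.
Qed.

Lemma comp_lt n i : (comp n i < 2^n)%nat.
Proof. unfold comp. pose proof (pow2_pos n). lia. Qed.

Lemma comp_comp n i : (i < 2^n)%nat -> comp n (comp n i) = i.
Proof. unfold comp. pose proof (pow2_pos n). lia. Qed.

Lemma comp_bits n i p : (1 <= n)%nat -> (i < 2^n)%nat -> (p < n)%nat ->
  Nat.testbit (comp n i) p = negb (Nat.testbit i p).
Proof.
  intros Hn Hi Hp. assert (E : comp n i = Nat.lnot i n).
  { rewrite Nat.lnot_sub_low. rewrite Nat.ones_equiv, <- Nat.sub_1_r. unfold comp. lia.
    destruct (Nat.eq_dec i 0) as [->|Hi0]. change (Nat.log2 0) with 0%nat; lia.
    apply Nat.log2_lt_pow2; auto; lia. }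
  rewrite E. apply Nat.lnot_spec_low; auto.
Qed.

Lemma wb_comp n k i : (1 <= k)%nat -> (k < n)%nat -> (i < 2^n)%nat -> wb n k (comp n i) = wb n k i.
Proof.
  intros Hk Hkn Hi. unfold wb. rewrite !comp_bits by lia.
  destruct (Nat.testbit i (n-k)), (Nat.testbit i (n-k-1)); auto.
Qed.

Lemma fl_comp n k i : (1 <= k)%nat -> (k < n)%nat -> (i < 2^n)%nat ->
  fl n k (comp n i) = comp n (fl n k i).
Proof.
  intros Hk Hkn Hi. apply Nat.bits_inj_iff. intros p.
  destruct (Nat.lt_ge_cases p n).
  - rewrite comp_bits by (try apply fl_lt; lia). unfold fl.
    rewrite !Nat.lxor_spec, comp_bits by lia.
    destruct (Nat.testbit i p), (Nat.testbit (2^(n-k)) p); auto.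
  - rewrite (lt_pow2_bits n (fl n k (comp n i))) by (try apply fl_lt; try apply comp_lt; lia).
    rewrite (lt_pow2_bits n (comp n _)) by (try apply comp_lt; lia). auto.
Qed.

Lemma Id_ind x y : Id x y = ind (x =? y)%nat.
Proof. reflexivity. Qed.

Lemma Dop_ind x y : Dop x y = ind (((x =? 0) && (y =? 2)) || ((x =? 3) && (y =? 1)))%nat.
Proof.
  unfold Dop, Mplus, outer, basis.
  destruct x as [|[|[|[|x]]]]; destruct y as [|[|[|[|y]]]]; simpl; apply Ceq; simpl; ring.
Qed.

Lemma ind_and a b : Cmul (ind a) (ind b) = ind (a && b).
Proof. destruct a; simpl; [apply Cmul_1_l | apply Cmul_0_l]. Qed.

Lemma div_eq_bits x y q : (x / 2^q = y / 2^q)%nat <->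
  (forall p, (q <= p)%nat -> Nat.testbit x p = Nat.testbit y p).
Proof.
  rewrite <- Nat.bits_inj_iff. split.
  - intros H p Hp. specialize (H (p - q)%nat). rewrite !Nat.div_pow2_bits in H.
    replace (p - q + q)%nat with p in H by lia. auto.
  - intros H p. rewrite !Nat.div_pow2_bits. apply H; lia.
Qed.

Lemma mod_eq_bits x y q : (x mod 2^q = y mod 2^q)%nat <->
  (forall p, (p < q)%nat -> Nat.testbit x p = Nat.testbit y p).
Proof.
  rewrite <- Nat.bits_inj_iff. split.
  - intros H p Hp. specialize (H p). rewrite !Nat.mod_pow2_bits_low in H; auto.
  - intros H p. destruct (Nat.lt_ge_cases p q).
    + rewrite !Nat.mod_pow2_bits_low; auto.
    + rewrite !Nat.mod_pow2_bits_high; auto.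
Qed.

Lemma mid_bits x m : ((x / 2^m) mod 4 = 2 * Nat.b2n (Nat.testbit x (S m)) + Nat.b2n (Nat.testbit x m))%nat.
Proof.
  rewrite !Nat.testbit_spec'.
  replace (2 ^ S m)%nat with (2^m * 2)%nat by (rewrite Nat.pow_succ_r'; lia).
  rewrite <- Nat.Div0.div_div.
  change 4%nat with (2*2)%nat. rewrite Nat.Div0.mod_mul_r. lia.
Qed.

Lemma key_bits (bi ba : nat -> bool) m :
  ((forall p : nat, (S (S m) <= p)%nat -> bi p = ba p) /\
   (2 * Nat.b2n (bi (S m)) + Nat.b2n (bi m) =? 0) &&
   (2 * Nat.b2n (ba (S m)) + Nat.b2n (ba m) =? 2)
   || (2 * Nat.b2n (bi (S m)) + Nat.b2n (bi m) =? 3) &&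
      (2 * Nat.b2n (ba (S m)) + Nat.b2n (ba m) =? 1) = true) /\
  (forall p : nat, (p < m)%nat -> bi p = ba p) <->
  negb (xorb (bi (S m)) (bi m)) = true /\
  (forall p : nat, ba p = xorb (bi p) (S m =? p))%nat.
Proof.
  split.
  - intros [[H1 H2] H3].
    destruct (bi (S m)) eqn:E1, (bi m) eqn:E2, (ba (S m)) eqn:E3, (ba m) eqn:E5;
      simpl in H2; try discriminate; split; auto;
    (intros p; destruct (Nat.lt_total p m) as [Hp|[Hp|Hp]];
         [ replace (S m =? p)%nat with false by (symmetry; apply Nat.eqb_neq; lia);
           rewrite xorb_false_r; symmetry; apply H3; lia
         | subst p; replace (S m =? m)%nat with false by (symmetry; apply Nat.eqb_neq; lia);
           rewrite E2, E5; auto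
         | destruct (Nat.eq_dec p (S m)) as [->|Hp'];
           [ rewrite Nat.eqb_refl, E1, E3; auto
           | replace (S m =? p)%nat with false by (symmetry; apply Nat.eqb_neq; lia);
             rewrite xorb_false_r; symmetry; apply H1; lia ] ]).
  - intros [H1 H2]. split; [split|].
    + intros p Hp. rewrite H2. replace (S m =? p)%nat with false by (symmetry; apply Nat.eqb_neq; lia).
      rewrite xorb_false_r; auto.
    + rewrite !H2, Nat.eqb_refl. replace (S m =? m)%nat with false by (symmetry; apply Nat.eqb_neq; lia).
      destruct (bi (S m)), (bi m); simpl in *; auto.
    + intros p Hp. rewrite H2. replace (S m =? p)%nat with false by (symmetry; apply Nat.eqb_neq; lia).
      rewrite xorb_false_r; auto.
Qed.

Lemma Dk_ind n k i a : (1 <= k)%nat -> (k < n)%nat ->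
  Dk n k i a = ind (negb (wb n k i) && (a =? fl n k i))%nat.
Proof.
  intros Hk Hkn. unfold Dk, kron. rewrite !Id_ind, Dop_ind, !ind_and.
  f_equal. set (m := (n - k - 1)%nat).
  assert (Hm : (n - k = S m)%nat) by (unfold m; lia).
  unfold wb, fl. rewrite Hm. fold m.
  rewrite !mid_bits.
  assert (E4 : forall x, (x / 2^m / 4 = x / 2^(S (S m)))%nat).
  { intros x. rewrite Nat.Div0.div_div.
    f_equal. rewrite !Nat.pow_succ_r'. lia. }
  rewrite !E4.
  apply eq_true_iff_eq. rewrite !andb_true_iff, !Nat.eqb_eq, div_eq_bits, mod_eq_bits.
  rewrite <- Nat.bits_inj_iff. unfold Nat.eqf.
  setoid_rewrite Nat.lxor_spec. setoid_rewrite Nat.pow2_bits_eqb.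
  replace (S m - 1)%nat with m by lia.
  apply (key_bits (Nat.testbit i) (Nat.testbit a) m).
Qed.

Lemma sigmax_ind x y : sigmax x y = ind (((x =? 0) && (y =? 1)) || ((x =? 1) && (y =? 0)))%nat.
Proof.
  unfold sigmax, Mplus, outer, basis.
  destruct x as [|[|x]]; destruct y as [|[|y]]; simpl; apply Ceq; simpl; ring.
Qed.

Lemma Xn_ind n i j : (i < 2^n)%nat -> (j < 2^n)%nat -> Xn n i j = ind (j =? comp n i)%nat.
Proof.
  revert i j. induction n; intros i j Hi Hj.
  - simpl in Hi, Hj. assert (i = 0%nat) by lia. assert (j = 0%nat) by lia. subst.
    simpl. unfold outer, basis. simpl. apply Ceq; simpl; ring.
  - simpl Xn. unfold kron. set (P := (2^n)%nat).
    assert (HP : (0 < P)%nat) by apply pow2_pos.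
    rewrite IHn by (apply Nat.mod_upper_bound; lia).
    rewrite sigmax_ind, ind_and. f_equal.
    assert (H2 : (2 ^ S n = 2 * P)%nat) by (unfold P; rewrite Nat.pow_succ_r'; lia).
    unfold comp. rewrite H2. rewrite H2 in Hi, Hj. fold P.
    pose proof (Nat.div_mod_eq i P) as Ei. pose proof (Nat.div_mod_eq j P) as Ej.
    pose proof (Nat.mod_upper_bound i P ltac:(lia)).
    pose proof (Nat.mod_upper_bound j P ltac:(lia)).
    assert (Hqi : (i / P < 2)%nat) by (apply Nat.Div0.div_lt_upper_bound; lia).
    assert (Hqj : (j / P < 2)%nat) by (apply Nat.Div0.div_lt_upper_bound; lia).
    set (qi := (i / P)%nat) in *. set (qj := (j / P)%nat) in *.
    set (ri := (i mod P)%nat) in *. set (rj := (j mod P)%nat) in *.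
    apply eq_true_iff_eq. rewrite andb_true_iff, orb_true_iff, !andb_true_iff, !Nat.eqb_eq.
    destruct qi as [|[|qi]]; [| |lia]; destruct qj as [|[|qj]]; try lia; split; intros; lia.
Qed.

Lemma Xn_mul n rho i j : (i < 2^n)%nat -> (j < 2^n)%nat ->
  Mmul (2^n) (Xn n) rho i j = rho (comp n i) j.
Proof.
  intros Hi Hj. unfold Mmul.
  rewrite (Csum_single _ _ (comp n i)) by (try apply comp_lt; intros c Hc Hne;
    rewrite Xn_ind by auto; rewrite Cmul_ind_l;
    replace (c =? comp n i)%nat with false by (symmetry; apply Nat.eqb_neq; auto); auto).
  rewrite Xn_ind by (auto; apply comp_lt). rewrite Nat.eqb_refl. apply Cmul_1_l.
Qed.

Definition dark n i := forall k, (1 <= k)%nat -> (k < n)%nat -> wb n k i = false.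

Lemma ones_eq n : Nat.ones n = (2^n - 1)%nat.
Proof. rewrite Nat.ones_equiv, <- Nat.sub_1_r; auto. Qed.

Lemma dark_iff n i : (1 <= n)%nat -> (i < 2^n)%nat -> (dark n i <-> (i = 0 \/ i = 2^n - 1)%nat).
Proof.
  intros Hn Hi. split.
  - intros Hd.
    assert (Hb : forall p, (p < n)%nat -> Nat.testbit i p = Nat.testbit i 0).
    { induction p; intros Hp; auto.
      specialize (Hd (n - S p)%nat ltac:(lia) ltac:(lia)). unfold wb in Hd.
      replace (n - (n - S p))%nat with (S p) in Hd by lia.
      replace (S p - 1)%nat with p in Hd by lia.
      transitivity (Nat.testbit i p); [|apply IHp; lia]. destruct (Nat.testbit i (S p)), (Nat.testbit i p); auto; discriminate. }
    destruct (Nat.testbit i 0) eqn:E0.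
    + right. rewrite <- ones_eq. apply Nat.bits_inj_iff. intros p.
      destruct (Nat.lt_ge_cases p n).
      * rewrite Hb by lia; try rewrite E0; rewrite Nat.ones_spec_low; auto.
      * rewrite lt_pow2_bits with (n:=n), Nat.ones_spec_high; auto.
    + left. apply Nat.bits_inj_iff. intros p. rewrite Nat.bits_0.
      destruct (Nat.lt_ge_cases p n).
      * rewrite Hb by lia; try rewrite E0; auto.
      * rewrite lt_pow2_bits with (n:=n); auto.
  - intros [-> | ->] k Hk Hkn; unfold wb.
    + rewrite !Nat.bits_0; auto.
    + rewrite <- ones_eq, !Nat.ones_spec_low by lia. auto.
Qed.

Lemma nondark_ex n i : (1 <= n)%nat -> (i < 2^n)%nat -> ~ (i = 0 \/ i = 2^n - 1)%nat ->
  exists k, (1 <= k)%nat /\ (k < n)%nat /\ wb n k i = true.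
Proof.
  intros Hn Hi H. rewrite <- dark_iff in H by auto. unfold dark in H.
  apply Classical_Pred_Type.not_all_ex_not in H. destruct H as [k Hk].
  exists k. destruct (le_lt_dec 1 k); [|exfalso; apply Hk; intros; lia]; try lia.
  destruct (le_lt_dec n k); [exfalso; apply Hk; intros; lia|].
  refine (conj l (conj l0 _)). destruct (wb n k i); auto; exfalso; apply Hk; auto.
Qed.

Section Dis.
Variable n k : nat.
Hypothesis Hk : (1 <= k)%nat.
Hypothesis Hkn : (k < n)%nat.
Let N := (2 ^ n)%nat.

Lemma DkR rho i b : (i < N)%nat ->
  Mmul N (Dk n k) rho i b = if negb (wb n k i) then rho (fl n k i) b else C0.
Proof.
  intros Hi. unfold Mmul. destruct (negb (wb n k i)) eqn:E.
  - rewrite (Csum_single _ _ (fl n k i)) by (try (apply fl_lt; auto); intros c Hc Hne;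
      rewrite Dk_ind by auto; rewrite E; simpl;
      replace (c =? fl n k i)%nat with false by (symmetry; apply Nat.eqb_neq; auto);
      apply Cmul_0_l).
    rewrite Dk_ind, E, Nat.eqb_refl by auto. apply Cmul_1_l.
  - apply Csum_zero. intros c Hc. rewrite Dk_ind, E by auto. apply Cmul_0_l.
Qed.

Lemma DkRDk rho i j : (i < N)%nat -> (j < N)%nat ->
  Mmul N (Mmul N (Dk n k) rho) (Madj (Dk n k)) i j =
  if negb (wb n k i) && negb (wb n k j) then rho (fl n k i) (fl n k j) else C0.
Proof.
  intros Hi Hj. unfold Mmul at 1. unfold Madj.
  destruct (negb (wb n k j)) eqn:E.
  - rewrite (Csum_single _ _ (fl n k j)) by (try (apply fl_lt; auto); intros c Hc Hne;
      rewrite (Dk_ind n k j) by auto; rewrite E; simpl;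
      replace (c =? fl n k j)%nat with false by (symmetry; apply Nat.eqb_neq; auto);
      simpl; rewrite Cconj_0; apply Cmul_0_r).
    rewrite (Dk_ind n k j), E, Nat.eqb_refl by auto. simpl. rewrite Cconj_1, Cmul_1_r.
    rewrite DkR by auto. rewrite andb_true_r. auto.
  - rewrite andb_false_r. apply Csum_zero. intros c Hc.
    rewrite (Dk_ind n k j), E by auto. simpl. rewrite Cconj_0. apply Cmul_0_r.
Qed.

Lemma DD i a : (i < N)%nat -> (a < N)%nat ->
  Mmul N (Madj (Dk n k)) (Dk n k) i a = ind (wb n k i && (a =? i))%nat.
Proof.
  intros Hi Ha. unfold Mmul, Madj.
  rewrite (Csum_single _ _ (fl n k i)) by (try (apply fl_lt; auto); intros c Hc Hne;
      rewrite (Dk_ind n k c i) by auto;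
      replace (i =? fl n k c)%nat with false by (symmetry; apply Nat.eqb_neq; intros ->;
        apply Hne; symmetry; apply fl_fl);
      rewrite andb_false_r; simpl; rewrite Cconj_0; apply Cmul_0_l).
  rewrite !Dk_ind by auto. rewrite fl_fl, Nat.eqb_refl, wb_fl by auto.
  rewrite negb_involutive, andb_true_r, Cconj_ind, ind_and.
  f_equal. destruct (wb n k i); auto.
Qed.

Lemma DDR rho i j : (i < N)%nat -> (j < N)%nat ->
  Mmul N (Mmul N (Madj (Dk n k)) (Dk n k)) rho i j = if wb n k i then rho i j else C0.
Proof.
  intros Hi Hj. unfold Mmul at 1.
  rewrite (Csum_single _ _ i) by (auto; intros c Hc Hne; rewrite DD by auto;
    replace (c =? i)%nat with false by (symmetry; apply Nat.eqb_neq; auto);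
    rewrite andb_false_r; apply Cmul_0_l).
  rewrite DD by auto. rewrite Nat.eqb_refl, andb_true_r, Cmul_ind_l. auto.
Qed.

Lemma RDD rho i j : (i < N)%nat -> (j < N)%nat ->
  Mmul N rho (Mmul N (Madj (Dk n k)) (Dk n k)) i j = if wb n k j then rho i j else C0.
Proof.
  intros Hi Hj. unfold Mmul at 1.
  rewrite (Csum_single _ _ j) by (auto; intros c Hc Hne; rewrite DD by auto;
    replace (j =? c)%nat with false by (symmetry; apply Nat.eqb_neq; auto);
    rewrite andb_false_r; apply Cmul_0_r).
  rewrite DD by auto. rewrite Nat.eqb_refl, andb_true_r, Cmul_ind_r. auto.
Qed.

Definition bR (b : bool) : R := if b then 1 else 0.

Lemma dissip_Re rho i j : (i < N)%nat -> (j < N)%nat ->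
  Re (dissip N (Dk n k) rho i j) =
  (if negb (wb n k i) && negb (wb n k j) then Re (rho (fl n k i) (fl n k j)) else 0)
  - / 2 * (bR (wb n k i) + bR (wb n k j)) * Re (rho i j).
Proof.
  intros Hi Hj. unfold dissip, Mplus, Mscale.
  rewrite DkRDk, DDR, RDD by auto.
  destruct (negb (wb n k i) && negb (wb n k j)), (wb n k i), (wb n k j); unfold bR; simpl; ring.
Qed.

Lemma dissip_Im rho i j : (i < N)%nat -> (j < N)%nat ->
  Im (dissip N (Dk n k) rho i j) =
  (if negb (wb n k i) && negb (wb n k j) then Im (rho (fl n k i) (fl n k j)) else 0)
  - / 2 * (bR (wb n k i) + bR (wb n k j)) * Im (rho i j).
Proof.
  intros Hi Hj. unfold dissip, Mplus, Mscale.
  rewrite DkRDk, DDR, RDD by auto.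
  destruct (negb (wb n k i) && negb (wb n k j)), (wb n k i), (wb n k j); unfold bR; simpl; ring.
Qed.

End Dis.

Definition LR n (r : nat -> nat -> R) i j : R :=
  rsum (n-1) (fun k' =>
    (if negb (wb n (S k') i) && negb (wb n (S k') j) then r (fl n (S k') i) (fl n (S k') j) else 0)
    - / 2 * (bR (wb n (S k') i) + bR (wb n (S k') j)) * r i j).

Lemma Re_Msum1 K f i j : Re (Msum1 K f i j) = rsum K (fun k' => Re (f (S k') i j)).
Proof. induction K; simpl; auto. unfold Mplus. simpl. rewrite IHK. auto. Qed.
Lemma Im_Msum1 K f i j : Im (Msum1 K f i j) = rsum K (fun k' => Im (f (S k') i j)).
Proof. induction K; simpl; auto. unfold Mplus. simpl. rewrite IHK. auto. Qed.

Lemma Lind_Re n rho i j : (i < 2^n)%nat -> (j < 2^n)%nat ->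
  Re (Lind n rho i j) = LR n (fun a b => Re (rho a b)) i j.
Proof.
  intros Hi Hj. unfold Lind. rewrite Re_Msum1. unfold LR. apply rsum_ext.
  intros k' Hk'. apply dissip_Re; auto; lia.
Qed.
Lemma Lind_Im n rho i j : (i < 2^n)%nat -> (j < 2^n)%nat ->
  Im (Lind n rho i j) = LR n (fun a b => Im (rho a b)) i j.
Proof.
  intros Hi Hj. unfold Lind. rewrite Im_Msum1. unfold LR. apply rsum_ext.
  intros k' Hk'. apply dissip_Im; auto; lia.
Qed.

Lemma LR_ext n r r' i j : (i < 2^n)%nat -> (j < 2^n)%nat ->
  (forall a b, (a < 2^n)%nat -> (b < 2^n)%nat -> r a b = r' a b) ->
  LR n r i j = LR n r' i j.
Proof.
  intros Hi Hj H. unfold LR. apply rsum_ext. intros k' Hk'.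
  rewrite !H by (auto; apply fl_lt; lia). auto.
Qed.

Fixpoint LRpow n (m : nat) (r : nat -> nat -> R) : nat -> nat -> R :=
  match m with O => r | S m' => LR n (LRpow n m' r) end.

Lemma Lpow_Re n m rho i j : (i < 2^n)%nat -> (j < 2^n)%nat ->
  Re (Lpow n m rho i j) = LRpow n m (fun a b => Re (rho a b)) i j.
Proof.
  revert i j. induction m; intros i j Hi Hj; simpl; auto.
  rewrite Lind_Re by auto. apply LR_ext; auto.
Qed.
Lemma Lpow_Im n m rho i j : (i < 2^n)%nat -> (j < 2^n)%nat ->
  Im (Lpow n m rho i j) = LRpow n m (fun a b => Im (rho a b)) i j.
Proof.
  revert i j. induction m; intros i j Hi Hj; simpl; auto.
  rewrite Lind_Im by auto. apply LR_ext; auto.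
Qed.

Lemma bR_range b : 0 <= bR b <= 1.
Proof. destruct b; unfold bR; lra. Qed.

Lemma LR_bound n r M i j : (0 <= M) -> (i < 2^n)%nat -> (j < 2^n)%nat ->
  (forall a b, (a < 2^n)%nat -> (b < 2^n)%nat -> Rabs (r a b) <= M) ->
  Rabs (LR n r i j) <= 2 * INR n * M.
Proof.
  intros HM Hi Hj H. unfold LR. eapply Rle_trans; [apply rsum_abs|].
  eapply Rle_trans with (rsum (n-1) (fun _ => 2 * M)).
  - apply rsum_le. intros k' Hk'.
    unfold Rminus; eapply Rle_trans; [apply Rabs_triang|]; rewrite Rabs_Ropp.
    rewrite Rabs_mult. rewrite Rabs_mult.
    pose proof (bR_range (wb n (S k') i)). pose proof (bR_range (wb n (S k') j)).
    assert (Rabs (/2) = /2) by (apply Rabs_right; lra).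
    assert (Rabs (bR (wb n (S k') i) + bR (wb n (S k') j)) <= 2) by (apply Rabs_le; lra).
    assert (Rabs (if negb (wb n (S k') i) && negb (wb n (S k') j) then r (fl n (S k') i) (fl n (S k') j) else 0) <= M).
    { destruct (_ && _). apply H; apply fl_lt; lia. rewrite Rabs_R0; auto. }
    pose proof (H i j Hi Hj).
    assert (Rabs (bR (wb n (S k') i) + bR (wb n (S k') j)) * Rabs (r i j) <= 2 * M)
      by (apply Rmult_le_compat; auto using Rabs_pos).
    match goal with Hh : Rabs (/2) = /2 |- _ => rewrite Hh end. rewrite Rmult_assoc.
    lra.
  - rewrite rsum_const. assert (INR (n-1) <= INR n) by (apply le_INR; lia).
    nra.
Qed.

Lemma LR_comp_l n r i j : (1 <= n)%nat -> (i < 2^n)%nat -> (j < 2^n)%nat ->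
  (forall a b, (a < 2^n)%nat -> (b < 2^n)%nat -> r (comp n a) b = r a b) ->
  LR n r (comp n i) j = LR n r i j.
Proof.
  intros Hn Hi Hj H. unfold LR. apply rsum_ext. intros k' Hk'.
  rewrite wb_comp, fl_comp by lia. rewrite !H by (auto; apply fl_lt; lia). auto.
Qed.

Lemma LR_comp_r n r i j : (1 <= n)%nat -> (i < 2^n)%nat -> (j < 2^n)%nat ->
  (forall a b, (a < 2^n)%nat -> (b < 2^n)%nat -> r a (comp n b) = r a b) ->
  LR n r i (comp n j) = LR n r i j.
Proof.
  intros Hn Hi Hj H. unfold LR. apply rsum_ext. intros k' Hk'.
  rewrite (wb_comp n (S k') j), (fl_comp n (S k') j) by lia. rewrite !H by (auto; apply fl_lt; lia). auto.
Qed.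

Lemma reindex n k g : (1 <= k)%nat -> (k < n)%nat ->
  rsum (2^n) (fun i => if negb (wb n k i) then g (fl n k i) else 0) =
  rsum (2^n) (fun i => if wb n k i then g i else 0).
Proof.
  intros Hk Hkn.
  transitivity (rsum (2^n) (fun i => rsum (2^n) (fun c =>
     if negb (wb n k i) && (c =? fl n k i)%nat then g c else 0))).
  - apply rsum_ext. intros i Hi. symmetry.
    rewrite (rsum_single _ _ (fl n k i)) by (try (apply fl_lt; auto); intros c Hc Hne;
      replace (c =? fl n k i)%nat with false by (symmetry; apply Nat.eqb_neq; auto);
      rewrite andb_false_r; auto).
    rewrite Nat.eqb_refl, andb_true_r. auto.
  - rewrite rsum_swap. apply rsum_ext. intros c Hc.
    rewrite (rsum_single _ _ (fl n k c)) by (try (apply fl_lt; auto); intros i Hi Hne;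
      replace (c =? fl n k i)%nat with false by (symmetry; apply Nat.eqb_neq; intros ->;
        apply Hne; symmetry; apply fl_fl);
      rewrite andb_false_r; auto).
    rewrite fl_fl, Nat.eqb_refl, andb_true_r, wb_fl, negb_involutive by auto. auto.
Qed.

Lemma LR_trace n r : rsum (2^n) (fun i => LR n r i i) = 0.
Proof.
  unfold LR. rewrite rsum_swap. apply rsum_zero. intros k' Hk'.
  transitivity (rsum (2^n) (fun i => (if negb (wb n (S k') i) then r (fl n (S k') i) (fl n (S k') i) else 0)
     - (if wb n (S k') i then r i i else 0))).
  - apply rsum_ext. intros i Hi. cbv beta. destruct (wb n (S k') i); cbn [negb andb bR]; field.
  - rewrite rsum_minus. rewrite (reindex n (S k') (fun a => r a a)) by lia. ring.
Qed.

Definition Gin n (r : nat -> nat -> R) i j : R :=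
  rsum (n-1) (fun k' =>
    if negb (wb n (S k') i) && negb (wb n (S k') j) then r (fl n (S k') i) (fl n (S k') j) else 0).
Definition lam n i j : R := / 2 * rsum (n-1) (fun k' => bR (wb n (S k') i) + bR (wb n (S k') j)).

Lemma LR_split n r i j : LR n r i j = Gin n r i j - lam n i j * r i j.
Proof.
  unfold LR, Gin, lam. rewrite rsum_minus. f_equal.
  rewrite <- rsum_scal. rewrite Rmult_comm, <- rsum_scal. apply rsum_ext; intros; ring.
Qed.

Lemma lam_ge n i j : (exists k, (1 <= k)%nat /\ (k < n)%nat /\ (wb n k i = true \/ wb n k j = true)) ->
  / 2 <= lam n i j.
Proof.
  intros [k [Hk [Hkn Hw]]]. unfold lam.
  assert (1 <= rsum (n-1) (fun k' => bR (wb n (S k') i) + bR (wb n (S k') j))).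
  { eapply Rle_trans; [| apply (rsum_term_le _ _ (k-1)%nat)].
    - cbv beta. replace (S (k-1)) with k by lia.
      pose proof (bR_range (wb n k i)); pose proof (bR_range (wb n k j)).
      destruct Hw as [E|E]; rewrite E in *; simpl in *; lra.
    - lia.
    - intros; pose proof (bR_range (wb n (S i0) i)); pose proof (bR_range (wb n (S i0) j)); lra. }
  lra.
Qed.

Fixpoint nsum (m : nat) (f : nat -> nat) : nat :=
  match m with O => O | S p => (nsum p f + f p)%nat end.

Lemma nsum_le m f g : (forall i, (i < m)%nat -> (f i <= g i)%nat) -> (nsum m f <= nsum m g)%nat.
Proof. induction m; intros H; simpl; auto. pose proof (H m ltac:(lia)). pose proof (IHm ltac:(intros; apply H; lia)). lia. Qed.
Lemma nsum_plus m f g : nsum m (fun i => f i + g i)%nat = (nsum m f + nsum m g)%nat.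
Proof. induction m; simpl; auto. rewrite IHm; lia. Qed.
Lemma nsum_ind m c : nsum m (fun k' => if (S k' =? c)%nat then c else O) = (if (1 <=? c) && (c <=? m) then c else O)%nat.
Proof.
  induction m.
  { simpl; destruct c; simpl; auto. }
  cbn [nsum]. rewrite IHm. cbv beta. destruct (Nat.eqb_spec (S m) c); destruct (Nat.leb_spec 1 c); destruct (Nat.leb_spec c m);
  destruct (Nat.leb_spec c (S m)); simpl; lia.
Qed.

Definition Phi n i : nat := nsum (n-1) (fun k' => if wb n (S k') i then S k' else O).

Lemma Phi_le n i : (Phi n i <= n * n)%nat.
Proof.
  unfold Phi. eapply Nat.le_trans. apply (nsum_le _ _ (fun _ => n)).
  intros k' Hk'. destruct (wb n (S k') i); lia.
  clear. assert (forall m, nsum m (fun _ => n) = m * n)%nat.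
  { induction m; simpl; auto. rewrite IHm. lia. }
  rewrite H. nia.
Qed.

Lemma wb_fl_other n k q i : (1 <= k)%nat -> (k < n)%nat -> (1 <= q)%nat -> (q < n)%nat ->
  q <> k -> q <> (k - 1)%nat -> wb n q (fl n k i) = wb n q i.
Proof.
  intros. unfold wb, fl. rewrite !Nat.lxor_spec, !Nat.pow2_bits_eqb.
  replace (n - k =? n - q)%nat with false by (symmetry; apply Nat.eqb_neq; lia).
  replace (n - k =? n - q - 1)%nat with false by (symmetry; apply Nat.eqb_neq; lia).
  rewrite !xorb_false_r. auto.
Qed.

Lemma Phi_fl n k i : (1 <= k)%nat -> (k < n)%nat -> wb n k i = false ->
  (Phi n i + 1 <= Phi n (fl n k i))%nat.
Proof.
  intros Hk Hkn Hw. unfold Phi.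
  assert (Hterm : forall k', (k' < n - 1)%nat ->
    ((if wb n (S k') i then S k' else O) + (if (S k' =? k)%nat then k else O) <=
     (if wb n (S k') (fl n k i) then S k' else O) + (if (S k' =? k - 1)%nat then (k-1) else O))%nat).
  { intros k' Hk'. destruct (Nat.eqb_spec (S k') k) as [E|E].
    - subst k. rewrite Hw, wb_fl, Hw by lia. simpl negb. cbv iota. lia.
    - destruct (Nat.eqb_spec (S k') (k-1)) as [E'|E'].
      + destruct (wb n (S k') i), (wb n (S k') (fl n k i)); lia.
      + rewrite wb_fl_other by lia. lia. }
  pose proof (nsum_le _ _ _ Hterm) as HH. rewrite !nsum_plus, !nsum_ind in HH.
  replace (1 <=? k)%nat with true in HH by (symmetry; apply Nat.leb_le; lia).
  replace (k <=? n - 1)%nat with true in HH by (symmetry; apply Nat.leb_le; lia). simpl in HH.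
  destruct (match (k - 1)%nat with 0%nat => false | S _ => true end && (k - 1 <=? n - 1))%nat; lia.
Qed.

Lemma PSeries_lin (u v : nat -> R) a b x : ex_pseries u x -> ex_pseries v x ->
  PSeries (fun m => a * u m + b * v m) x = a * PSeries u x + b * PSeries v x.
Proof.
  intros Hu Hv. rewrite <- !PSeries_scal. rewrite <- PSeries_plus.
  - apply PSeries_ext. intros; reflexivity.
  - apply ex_pseries_scal; auto. apply Rmult_comm.
  - apply ex_pseries_scal; auto. apply Rmult_comm.
Qed.

Lemma ex_pseries_lin (u v : nat -> R) a b x : ex_pseries u x -> ex_pseries v x ->
  ex_pseries (fun m => a * u m + b * v m) x.
Proof.
  intros Hu Hv.
  apply (ex_pseries_ext (PS_plus (PS_scal a u) (PS_scal b v))).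
  - intros; reflexivity.
  - apply ex_pseries_plus; apply ex_pseries_scal; auto; apply Rmult_comm.
Qed.

Lemma PSeries_rsum K (g : nat -> nat -> R) x : (forall q, (q < K)%nat -> ex_pseries (g q) x) ->
  ex_pseries (fun m => rsum K (fun q => g q m)) x /\
  PSeries (fun m => rsum K (fun q => g q m)) x = rsum K (fun q => PSeries (g q) x).
Proof.
  induction K; intros H.
  - simpl. split.
    + apply CV_radius_inside. rewrite CV_radius_const_0. simpl; auto.
    + apply PSeries_const_0.
  - destruct IHK as [IH1 IH2]. intros; apply H; lia. simpl. split.
    + apply (ex_pseries_ext (fun m => 1 * rsum K (fun q => g q m) + 1 * g K m)).
      intros m; simpl; rewrite !Rmult_1_l; reflexivity. apply ex_pseries_lin; auto.
    + rewrite (PSeries_ext _ (fun m => 1 * rsum K (fun q => g q m) + 1 * g K m)) by (intros; ring).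
      rewrite PSeries_lin; auto. rewrite IH2. ring.
Qed.

Lemma pow_fact_le_exp x k : 0 <= x -> x ^ k / INR (fact k) <= exp x.
Proof.
  intros Hx. eapply Rle_trans; [|apply (ElemFct.exp_ge_taylor x k Hx)].
  destruct k. simpl. lra.
  rewrite tech5.
  assert (0 <= sum_f_R0 (fun k0 => x ^ k0 / INR (fact k0)) k).
  { apply cond_pos_sum. intros. apply Rmult_le_pos. apply pow_le; auto.
    apply Rlt_le, Rinv_0_lt_compat, INR_fact_lt_0. }
  lra.
Qed.

Section Ser.
Variable n : nat.
Hypothesis Hn : (1 <= n)%nat.
Variable r0 : nat -> nat -> R.

Definition aa m := LRpow n m r0.
Definition coef i j m := aa m i j / INR (fact m).
Definition FF i j t := PSeries (coef i j) t.

Lemma aa_bound : exists B, 0 <= B /\ forall m i j, (i < 2^n)%nat -> (j < 2^n)%nat ->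
  Rabs (aa m i j) <= B * (2 * INR n) ^ m.
Proof.
  set (B := rsum (2^n) (fun i => rsum (2^n) (fun j => Rabs (r0 i j)))).
  assert (HB : forall i j, (i < 2^n)%nat -> (j < 2^n)%nat -> Rabs (r0 i j) <= B).
  { intros i j Hi Hj. unfold B. eapply Rle_trans; [|apply (rsum_term_le _ _ i); auto].
    - apply (rsum_term_le _ (fun j => Rabs (r0 i j)) j); auto. intros; apply Rabs_pos.
    - intros; apply rsum_nonneg; intros; apply Rabs_pos. }
  exists B. split.
  - unfold B. apply rsum_nonneg; intros; apply rsum_nonneg; intros; apply Rabs_pos.
  - assert (0 <= B) by (unfold B; apply rsum_nonneg; intros; apply rsum_nonneg; intros; apply Rabs_pos).
    induction m; intros i j Hi Hj.
    + simpl. rewrite Rmult_1_r. apply HB; auto.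
    + unfold aa. simpl LRpow. eapply Rle_trans.
      apply (LR_bound n (LRpow n m r0) (B * (2*INR n)^m) i j).
      * apply Rmult_le_pos; auto. apply pow_le. pose proof (pos_INR n); lra.
      * auto.
      * auto.
      * apply IHm.
      * simpl. right; ring.
Qed.

Lemma radius i j x : (i < 2^n)%nat -> (j < 2^n)%nat -> Rbar_lt (Rabs x) (CV_radius (coef i j)).
Proof.
  intros Hi Hj. destruct aa_bound as [B [HB0 HB]].
  set (r := Rabs x + 1).
  assert (Hr : 0 <= r) by (unfold r; pose proof (Rabs_pos x); lra).
  assert (HE : exists M, forall k, Rabs (coef i j k * r ^ k) <= M).
  { exists (B * exp (2 * INR n * r)). intros k. unfold coef.
    rewrite Rabs_mult, Rabs_div, (Rabs_right (INR (fact k))), (Rabs_right (r^k)).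
    2: apply Rle_ge, pow_le; auto.
    2: apply Rle_ge, pos_INR.
    2: apply not_0_INR, fact_neq_0.
    pose proof (INR_fact_lt_0 k).
    apply Rle_trans with (B * ((2 * INR n * r) ^ k / INR (fact k))).
    - rewrite Rpow_mult_distr. unfold Rdiv.
      replace (B * ((2 * INR n) ^ k * r ^ k * / INR (fact k))) with ((B * (2 * INR n) ^ k) * / INR (fact k) * r ^ k) by ring.
      apply Rmult_le_compat_r. apply pow_le; auto.
      apply Rmult_le_compat_r. left; apply Rinv_0_lt_compat; auto.
      apply HB; auto.
    - apply Rmult_le_compat_l; auto. apply pow_fact_le_exp.
      pose proof (pos_INR n). apply Rmult_le_pos; auto. lra. }
  pose proof (proj1 (CV_radius_bounded (coef i j)) r HE) as Hle.
  eapply Rbar_lt_le_trans; [|apply Hle]. simpl. unfold r. lra.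
Qed.

Lemma ex_ps i j x : (i < 2^n)%nat -> (j < 2^n)%nat -> ex_pseries (coef i j) x.
Proof. intros; apply CV_radius_inside, radius; auto. Qed.

Lemma FF_Un_cv i j t : (i < 2^n)%nat -> (j < 2^n)%nat ->
  Un_cv (fun M => sum_f_R0 (fun m => t ^ m / INR (fact m) * aa m i j) M) (FF i j t).
Proof.
  intros Hi Hj. pose proof (PSeries_correct _ _ (ex_ps i j t Hi Hj)) as H.
  unfold is_pseries in H. apply is_series_Reals in H. unfold FF.
  intros eps Heps. destruct (H eps Heps) as [N0 HN]. exists N0. intros m Hm.
  specialize (HN m Hm). rewrite (sum_eq _ (fun k => scal (pow_n t k) (coef i j k))). apply HN.
  intros k _. cbv beta. unfold scal; simpl; unfold mult; simpl. assert (E : pow_n t k = t ^ k) by (induction k; simpl; auto; rewrite IHk; auto). rewrite E. unfold coef. change (scal (t ^ k) (aa k i j / INR (fact k))) with ((t ^ k) * (aa k i j / INR (fact k))). field.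
  apply not_0_INR, fact_neq_0.
Qed.

End Ser.

Lemma PSeries_rsum' K (g : nat -> nat -> R) x : (forall q, (q < K)%nat -> ex_pseries (g q) x) ->
  PSeries (fun m => rsum K (fun q => g q m)) x = rsum K (fun q => PSeries (g q) x).
Proof. intros H; apply PSeries_rsum; auto. Qed.

Lemma LR_as_rsum n r i j : LR n r i j = rsum (n-1) (fun q =>
   (if negb (wb n (S q) i) && negb (wb n (S q) j) then 1 else 0) * r (fl n (S q) i) (fl n (S q) j)
   + (- (/2 * (bR (wb n (S q) i) + bR (wb n (S q) j)))) * r i j).
Proof. unfold LR. apply rsum_ext. intros q _. destruct (_ && _); ring. Qed.

Lemma FF_derive n r0 i j t : (1 <= n)%nat -> (i < 2^n)%nat -> (j < 2^n)%nat ->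
  is_derive (FF n r0 i j) t (LR n (fun a b => FF n r0 a b t) i j).
Proof.
  intros Hn Hi Hj.
  assert (H := is_derive_PSeries (coef n r0 i j) t (radius n r0 i j t Hi Hj)).
  unfold FF. eapply is_derive_ext; [intros; reflexivity|].
  replace (LR n (fun a b => PSeries (coef n r0 a b) t) i j) with (PSeries (PS_derive (coef n r0 i j)) t); auto.
  rewrite (PSeries_ext _ (fun m => rsum (n-1) (fun q =>
   (if negb (wb n (S q) i) && negb (wb n (S q) j) then 1 else 0) * coef n r0 (fl n (S q) i) (fl n (S q) j) m
   + (- (/2 * (bR (wb n (S q) i) + bR (wb n (S q) j)))) * coef n r0 i j m))).
  - rewrite LR_as_rsum. rewrite PSeries_rsum'.
    + apply rsum_ext. intros q Hq. apply PSeries_lin; apply ex_ps; auto; apply fl_lt; lia.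
    + intros q Hq. apply ex_pseries_lin; apply ex_ps; auto; apply fl_lt; lia.
  - intros m. unfold PS_derive, coef. unfold aa at 1. simpl LRpow. rewrite LR_as_rsum.
    rewrite fact_simpl, mult_INR.
    assert (Hf : INR (fact m) <> 0) by apply (not_0_INR _ (fact_neq_0 m)).
    assert (Hs : INR (S m) <> 0) by (apply not_0_INR; lia).
    transitivity (/ INR (fact m) * rsum (n - 1) (fun q =>
       (if negb (wb n (S q) i) && negb (wb n (S q) j) then 1 else 0) * LRpow n m r0 (fl n (S q) i) (fl n (S q) j) +
       - (/ 2 * (bR (wb n (S q) i) + bR (wb n (S q) j))) * LRpow n m r0 i j)).
    + field. auto.
    + rewrite <- rsum_scal. apply rsum_ext. intros q _. unfold aa. field. auto.
Qed.

Lemma FF_trace n r0 t : (1 <= n)%nat ->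
  rsum (2^n) (fun i => FF n r0 i i t) = rsum (2^n) (fun i => r0 i i).
Proof.
  intros Hn. unfold FF.
  assert (Hex : forall i, (i < 2^n)%nat -> ex_pseries (coef n r0 i i) t) by (intros; apply ex_ps; auto).
  rewrite <- PSeries_rsum' by auto.
  destruct (PSeries_rsum (2^n) (fun i => coef n r0 i i) t Hex) as [Hex2 _].
  rewrite PSeries_decr_1 by auto.
  rewrite (PSeries_ext (PS_decr_1 _) (fun _ => 0)).
  - rewrite PSeries_const_0. simpl (fact 0). unfold coef, aa. simpl LRpow.
    rewrite Rmult_0_r, Rplus_0_r. apply rsum_ext; intros. simpl. field.
  - intros m. unfold PS_decr_1, coef, aa. simpl LRpow.
    unfold Rdiv. rewrite (rsum_ext _ _ (fun i => / INR (fact (S m)) * LR n (LRpow n m r0) i i)) by (intros; ring).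
    rewrite rsum_scal, LR_trace. ring.
Qed.

Lemma aa_comp_l n r0 : (1 <= n)%nat ->
  (forall a b, (a < 2^n)%nat -> (b < 2^n)%nat -> r0 (comp n a) b = r0 a b) ->
  forall m a b, (a < 2^n)%nat -> (b < 2^n)%nat -> aa n r0 m (comp n a) b = aa n r0 m a b.
Proof.
  intros Hn H m. induction m; intros a b Ha Hb; unfold aa; simpl; auto.
  apply LR_comp_l; auto.
Qed.

Lemma aa_comp_r n r0 : (1 <= n)%nat ->
  (forall a b, (a < 2^n)%nat -> (b < 2^n)%nat -> r0 a (comp n b) = r0 a b) ->
  forall m a b, (a < 2^n)%nat -> (b < 2^n)%nat -> aa n r0 m a (comp n b) = aa n r0 m a b.
Proof.
  intros Hn H m. induction m; intros a b Ha Hb; unfold aa; simpl; auto.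
  apply LR_comp_r; auto.
Qed.

Lemma FF_comp_l n r0 i j t : (1 <= n)%nat -> (i < 2^n)%nat -> (j < 2^n)%nat ->
  (forall a b, (a < 2^n)%nat -> (b < 2^n)%nat -> r0 (comp n a) b = r0 a b) ->
  FF n r0 (comp n i) j t = FF n r0 i j t.
Proof.
  intros. unfold FF. apply PSeries_ext. intros m. unfold coef. rewrite aa_comp_l; auto.
Qed.

Lemma FF_comp_r n r0 i j t : (1 <= n)%nat -> (i < 2^n)%nat -> (j < 2^n)%nat ->
  (forall a b, (a < 2^n)%nat -> (b < 2^n)%nat -> r0 a (comp n b) = r0 a b) ->
  FF n r0 i (comp n j) t = FF n r0 i j t.
Proof.
  intros. unfold FF. apply PSeries_ext. intros m. unfold coef. rewrite aa_comp_r; auto.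
Qed.

Lemma derive_cont f x l : is_derive f x l -> continuity_pt f x.
Proof.
  intros H. apply derivable_continuous_pt. exists l. apply is_derive_Reals; auto.
Qed.

Lemma decay_step (F G : R -> R) lam C p :
  (forall t, is_derive F t (G t - lam * F t)) -> / 2 <= lam -> 0 <= C ->
  (forall t, 0 <= t -> Rabs (G t) <= C * (1 + t) ^ p * exp (- t / 2)) ->
  forall t, 0 <= t -> Rabs (F t) <= (Rabs (F 0) + C) * (1 + t) ^ (S p) * exp (- t / 2).
Proof.
  intros HF Hlam HC HG t Ht.
  assert (Hpow1 : forall q, 1 <= (1 + t) ^ q) by (intros; apply pow_R1_Rle; lra).
  destruct (Req_dec t 0) as [->|Ht0].
  - replace (- 0 / 2) with 0 by field. rewrite exp_0. specialize (Hpow1 (S p)).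
    pose proof (Rabs_pos (F 0)). nra.
  - set (h := fun s => exp (lam * s) * F s).
    assert (Hd : forall s, is_derive h s (exp (lam * s) * G s)).
    { intros s. unfold h.
      assert (He : is_derive (fun s => exp (lam*s)) s (lam * exp (lam * s))) by (auto_derive; auto; ring).
      pose proof (is_derive_mult _ _ _ _ _ He (HF s)) as Hm. simpl in Hm.
      eapply is_derive_ext; [|eapply filterdiff_ext_lin; [apply Hm|]]. intros; reflexivity.
      intros y. simpl. unfold scal; simpl; unfold mult; simpl. ring. }
    destruct (MVT_gen h 0 t (fun s => exp (lam * s) * G s)) as [c [Hc Hmvt]].
    + intros; apply Hd.
    + intros; eapply derive_cont; apply Hd.
    + rewrite Rmin_left, Rmax_right in Hc by lra.
      assert (Hc' : Rabs (exp (lam * c) * G c) <= C * (1 + t) ^ p * exp ((lam - /2) * t)).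
      { rewrite Rabs_mult, Rabs_right by (apply Rle_ge, Rlt_le, exp_pos).
        eapply Rle_trans. apply Rmult_le_compat_l. left; apply exp_pos. apply HG; lra.
        replace (exp (lam * c) * (C * (1 + c) ^ p * exp (- c / 2))) with
          (C * (1 + c) ^ p * (exp (lam * c) * exp (- c / 2))) by ring.
        rewrite <- exp_plus.
        apply Rmult_le_compat.
        - apply Rmult_le_pos; auto. apply pow_le; lra.
        - left; apply exp_pos.
        - apply Rmult_le_compat_l; auto. apply pow_incr; lra.
        - destruct (Req_dec (lam * c + - c / 2) ((lam - /2) * t)) as [E|E]. rewrite E; lra.
          left. apply exp_increasing. nra. }
      assert (Hht : Rabs (h t) <= Rabs (F 0) + t * (C * (1 + t) ^ p * exp ((lam - /2) * t))).
      { replace (h t) with (h 0 + (h t - h 0)) by ring. rewrite Hmvt.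
        unfold h at 1. rewrite Rmult_0_r, exp_0, Rmult_1_l.
        eapply Rle_trans. apply Rabs_triang. rewrite Rabs_mult, (Rabs_right (t - 0)) by lra.
        replace (t - 0) with t by ring. nra. }
      unfold h in Hht. rewrite Rabs_mult, Rabs_right in Hht by (apply Rle_ge, Rlt_le, exp_pos).
      assert (Hel : 0 < exp (lam * t)) by apply exp_pos.
      assert (E1 : Rabs (F t) <= exp (- (lam * t)) * Rabs (F 0) + t * (C * (1 + t) ^ p) * exp (- t / 2)).
      { apply Rmult_le_reg_l with (exp (lam * t)); auto.
        rewrite Rmult_plus_distr_l, <- Rmult_assoc, <- exp_plus.
        replace (lam * t + - (lam * t)) with 0 by ring. rewrite exp_0.
        replace (exp (lam * t) * (t * (C * (1 + t) ^ p) * exp (- t / 2))) with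
          (t * (C * (1 + t) ^ p * (exp (lam * t) * exp (- t / 2)))) by ring.
        rewrite <- exp_plus. replace (lam * t + - t / 2) with ((lam - /2) * t) by field. lra. }
      assert (E2 : exp (- (lam * t)) <= exp (- t / 2)).
      { destruct (Req_dec lam (/2)) as [->|Hne]. right; f_equal; field.
        left; apply exp_increasing. nra. }
      assert (Hp1 := Hpow1 (S p)). simpl in Hp1 |- *.
      assert (0 <= (1 + t) ^ p) by (apply pow_le; lra).
      pose proof (exp_pos (- t / 2)). pose proof (Rabs_pos (F 0)).
      assert (t * (C * (1 + t) ^ p) <= C * ((1 + t) * (1 + t) ^ p)) by nra.
      assert (exp (- (lam * t)) * Rabs (F 0) <= exp (- t / 2) * Rabs (F 0)) by nra.
      assert (Rabs (F 0) * exp (- t / 2) <= Rabs (F 0) * ((1 + t) * (1 + t) ^ p) * exp (- t / 2)).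
      { rewrite Rmult_assoc. apply Rmult_le_compat_l; auto. rewrite <- (Rmult_1_l (exp _)) at 1.
        apply Rmult_le_compat_r; lra. }
      nra.
Qed.

Lemma pow_le_exp q y : 0 <= y -> (1 + y) ^ q <= exp (INR q * y).
Proof.
  intros Hy. induction q.
  - simpl. rewrite Rmult_0_l, exp_0. lra.
  - rewrite S_INR. replace ((INR q + 1) * y) with (y + INR q * y) by ring. rewrite exp_plus.
    simpl. apply Rmult_le_compat; try lra. apply pow_le; lra. apply exp_ineq1_le.
Qed.

Lemma poly_exp_lim C p : 0 <= C -> forall eps, 0 < eps -> exists T, 0 <= T /\
  forall t, T <= t -> C * (1 + t) ^ p * exp (- t / 2) < eps.
Proof.
  intros HC eps Heps.
  set (q := INR (S p)). assert (Hq : 1 <= q) by (unfold q; rewrite S_INR; pose proof (pos_INR p); lra).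
  set (K := C * (2 * q) ^ p).
  assert (HK : 0 <= K) by (unfold K; apply Rmult_le_pos; auto; apply pow_le; lra).
  exists (2 * q * K / eps). split. apply Rmult_le_pos. nra. left; apply Rinv_0_lt_compat; auto.
  intros t Ht.
  assert (Ht0 : 0 <= t). { eapply Rle_trans; [|apply Ht]. apply Rmult_le_pos. nra. left; apply Rinv_0_lt_compat; auto. }
  set (y := t / (2 * q)).
  assert (Hy : 0 <= y) by (unfold y; apply Rmult_le_pos; auto; left; apply Rinv_0_lt_compat; lra).
  assert (E1 : (1 + y) ^ S p <= exp (t / 2)).
  { eapply Rle_trans. apply pow_le_exp; auto. right; f_equal. unfold y; fold q. field. lra. }
  assert (E2 : (1 + t) ^ p <= (2 * q) ^ p * (1 + y) ^ p).
  { rewrite <- Rpow_mult_distr. apply pow_incr. split. lra. unfold y.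
    replace (2*q*(1 + t/(2*q))) with (2*q + t) by (field; lra). lra. }
  assert (E3 : exp (- t / 2) = / exp (t / 2)).
  { rewrite <- exp_Ropp. f_equal. field. }
  rewrite E3.
  assert (Hpy : 0 < (1 + y) ^ p) by (apply pow_lt; lra).
  assert (H1y : 0 < 1 + y) by lra.
  assert (Hexp : 0 < exp (t / 2)) by apply exp_pos.
  apply Rle_lt_trans with (K / (1 + y)).
  - unfold K. simpl in E1. unfold Rdiv.
    apply Rle_trans with (C * ((2 * q) ^ p * (1 + y) ^ p) * / ((1 + y) * (1 + y) ^ p)).
    + apply Rmult_le_compat.
      * apply Rmult_le_pos; auto. apply pow_le; lra.
      * left; apply Rinv_0_lt_compat; auto.
      * apply Rmult_le_compat_l; auto.
      * apply Rinv_le_contravar; auto. nra.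
    + right. field. split; lra.
  - apply Rmult_lt_reg_r with (1 + y); auto. unfold Rdiv. rewrite Rmult_assoc, Rinv_l, Rmult_1_r by lra.
    assert (K <= eps * y).
    { unfold y. apply Rmult_le_compat_r with (r := / (2 * q)) in Ht.
      2: left; apply Rinv_0_lt_compat; lra.
      replace (2 * q * K / eps * / (2 * q)) with (K / eps) in Ht by (field; lra).
      apply Rmult_le_compat_l with (r := eps) in Ht; [|lra].
      replace (eps * (K / eps)) with K in Ht by (field; lra). 
      unfold Rdiv. nra. }
    nra.
Qed.

Definition expbd (f : R -> R) := exists C p, 0 <= C /\ forall t, 0 <= t -> Rabs (f t) <= C * (1 + t) ^ p * exp (- t / 2).

Lemma expbd_plus f g : expbd f -> expbd g -> expbd (fun t => f t + g t).
Proof.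
  intros [C1 [p1 [HC1 H1]]] [C2 [p2 [HC2 H2]]].
  exists (C1 + C2), (Nat.max p1 p2). split. lra. intros t Ht.
  assert (Hp1 : (1 + t) ^ p1 <= (1 + t) ^ Nat.max p1 p2) by (apply Rle_pow; [lra|lia]).
  assert (Hp2 : (1 + t) ^ p2 <= (1 + t) ^ Nat.max p1 p2) by (apply Rle_pow; [lra|lia]).
  pose proof (exp_pos (- t / 2)). specialize (H1 t Ht). specialize (H2 t Ht).
  eapply Rle_trans. apply Rabs_triang.
  assert (C1 * (1 + t) ^ p1 * exp (- t / 2) <= C1 * (1 + t) ^ Nat.max p1 p2 * exp (- t / 2)).
  { apply Rmult_le_compat_r. lra. apply Rmult_le_compat_l; auto. }
  assert (C2 * (1 + t) ^ p2 * exp (- t / 2) <= C2 * (1 + t) ^ Nat.max p1 p2 * exp (- t / 2)).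
  { apply Rmult_le_compat_r. lra. apply Rmult_le_compat_l; auto. }
  nra.
Qed.

Lemma expbd_zero : expbd (fun _ => 0).
Proof. exists 0, O. split. lra. intros. rewrite Rabs_R0. lra. Qed.

Lemma expbd_rsum K (g : nat -> R -> R) : (forall q, (q < K)%nat -> expbd (g q)) ->
  expbd (fun t => rsum K (fun q => g q t)).
Proof.
  induction K; intros H; simpl.
  - apply expbd_zero.
  - apply (expbd_plus (fun t => rsum K (fun q => g q t)) (g K)); [apply IHK; intros; apply H; lia | apply H; lia].
Qed.

Lemma expbd_ext f g : (forall t, f t = g t) -> expbd f -> expbd g.
Proof. intros E [C [p [HC H]]]. exists C, p. split; auto. intros. rewrite <- E. auto. Qed.

Definition haswall n i j := exists k, (1 <= k)%nat /\ (k < n)%nat /\ (wb n k i = true \/ wb n k j = true).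

Lemma decay n r0 : (1 <= n)%nat -> forall i j, (i < 2^n)%nat -> (j < 2^n)%nat ->
  haswall n i j -> expbd (FF n r0 i j).
Proof.
  intros Hn.
  assert (forall d i j, (2 * (n * n) - (Phi n i + Phi n j) = d)%nat -> (i < 2^n)%nat -> (j < 2^n)%nat ->
    haswall n i j -> expbd (FF n r0 i j)).
  { intros d. induction d as [d IH] using lt_wf_ind. intros i j Hd Hi Hj Hw.
    set (G := fun t => Gin n (fun a b => FF n r0 a b t) i j).
    assert (HG : expbd G).
    { unfold G, Gin. apply expbd_rsum. intros q Hq.
      destruct (negb (wb n (S q) i) && negb (wb n (S q) j)) eqn:E.
      - apply andb_true_iff in E. destruct E as [E1 E2]. apply negb_true_iff in E1, E2.
        apply (IH (2 * (n * n) - (Phi n (fl n (S q) i) + Phi n (fl n (S q) j)))%nat).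
        + pose proof (Phi_fl n (S q) i ltac:(lia) ltac:(lia) E1).
          pose proof (Phi_fl n (S q) j ltac:(lia) ltac:(lia) E2).
          pose proof (Phi_le n (fl n (S q) i)). pose proof (Phi_le n (fl n (S q) j)). lia.
        + auto.
        + apply fl_lt; auto; lia.
        + apply fl_lt; auto; lia.
        + exists (S q). split. lia. split. lia. left. rewrite wb_fl by lia. rewrite E1; auto.
      - apply expbd_zero. }
    destruct HG as [C [p [HC HGb]]].
    exists (Rabs (FF n r0 i j 0) + C), (S p). split. pose proof (Rabs_pos (FF n r0 i j 0)); lra.
    apply (decay_step (FF n r0 i j) G (lam n i j) C p); auto.
    - intros t. replace (G t - lam n i j * FF n r0 i j t) with (LR n (fun a b => FF n r0 a b t) i j) by (rewrite LR_split; reflexivity). apply FF_derive; auto.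
    - apply lam_ge. auto. }
  intros i j Hi Hj Hw. eapply H; eauto.
Qed.

Lemma expbd_lim f : expbd f -> forall eps, 0 < eps -> exists T, forall t, T <= t -> Rabs (f t) < eps.
Proof.
  intros [C [p [HC H]]] eps Heps. destruct (poly_exp_lim C p HC eps Heps) as [T [HT0 HT]].
  exists T. intros t Ht. eapply Rle_lt_trans. apply H. lra. apply HT; auto.
Qed.

Definition darkb n i := ((i =? 0) || (i =? 2^n - 1))%nat.

Lemma darkb_false n i : (1 <= n)%nat -> (i < 2^n)%nat -> darkb n i = false -> haswall n i i.
Proof.
  intros Hn Hi H. unfold darkb in H. apply orb_false_iff in H. destruct H as [H1 H2].
  apply Nat.eqb_neq in H1, H2. destruct (nondark_ex n i Hn Hi) as [k [Hk [Hkn Hw]]]. lia.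
  exists k; auto.
Qed.

Lemma haswall_of n i j : (1 <= n)%nat -> (i < 2^n)%nat -> (j < 2^n)%nat ->
  darkb n i && darkb n j = false -> haswall n i j.
Proof.
  intros Hn Hi Hj H. apply andb_false_iff in H. destruct H as [H|H].
  - destruct (darkb_false n _ Hn Hi H) as [k [Hk [Hkn Hw]]]; exists k; repeat split; auto; destruct Hw; auto.
  - destruct (darkb_false n _ Hn Hj H) as [k [Hk [Hkn Hw]]]; exists k; repeat split; auto; destruct Hw; auto.
Qed.

Lemma uniformT N (P : nat -> R -> Prop) : (forall i, (i < N)%nat -> exists T, forall t, T <= t -> P i t) ->
  exists T, forall t, T <= t -> forall i, (i < N)%nat -> P i t.
Proof.
  induction N; intros H.
  - exists 0. intros; lia.
  - destruct IHN as [T1 H1]. intros; apply H; lia.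
    destruct (H N ltac:(lia)) as [T2 H2]. exists (Rmax T1 T2). intros t Ht i Hi.
    destruct (Nat.eq_dec i N) as [->|Hne].
    + apply H2. apply Rle_trans with (Rmax T1 T2); [apply Rmax_r | exact Ht].
    + apply H1; [apply Rle_trans with (Rmax T1 T2); [apply Rmax_l | exact Ht] | lia].
Qed.

Lemma entry_lim n r tr : (1 <= n)%nat ->
  (forall a b, (a < 2^n)%nat -> (b < 2^n)%nat -> r (comp n a) b = r a b) ->
  (forall a b, (a < 2^n)%nat -> (b < 2^n)%nat -> r a (comp n b) = r a b) ->
  rsum (2^n) (fun i => r i i) = tr ->
  forall i j, (i < 2^n)%nat -> (j < 2^n)%nat -> forall eps, 0 < eps -> exists T, forall t, T <= t ->
    Rabs (FF n r i j t - (if darkb n i && darkb n j then tr / 2 else 0)) < eps.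
Proof.
  intros Hn HL HR Htr i j Hi Hj eps Heps.
  destruct (darkb n i && darkb n j) eqn:E.
  2: { destruct (expbd_lim _ (decay n r Hn i j Hi Hj (haswall_of n i j Hn Hi Hj E)) eps Heps) as [T HT].
       exists T. intros t Ht. rewrite Rminus_0_r. auto. }
  assert (HN : (2 <= 2^n)%nat).
  { pose proof (Nat.pow_le_mono_r 2 1 n ltac:(lia) Hn) as Hp. simpl in Hp. lia. }
  assert (Hc0 : comp n 0 = (2^n - 1)%nat) by (unfold comp; lia).
  assert (Hdd : forall a, (a < 2^n)%nat -> darkb n a = true -> forall t b, (b < 2^n)%nat -> FF n r a b t = FF n r 0 b t).
  { intros a Ha Hd t b Hb. unfold darkb in Hd. apply orb_true_iff in Hd. destruct Hd as [Hd|Hd];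
    apply Nat.eqb_eq in Hd; subst a. auto. rewrite <- Hc0. apply FF_comp_l; auto; lia. }
  assert (Hdd' : forall b, (b < 2^n)%nat -> darkb n b = true -> forall t, FF n r 0 b t = FF n r 0 0 t).
  { intros b Hb Hd t. unfold darkb in Hd. apply orb_true_iff in Hd. destruct Hd as [Hd|Hd];
    apply Nat.eqb_eq in Hd; subst b. auto. rewrite <- Hc0. apply FF_comp_r; auto; lia. }
  set (N := (2^n)%nat) in *.
  apply andb_true_iff in E. destruct E as [Ei Ej].
  set (S := fun t => rsum N (fun a => if darkb n a then 0 else FF n r a a t)).
  assert (HS : expbd S).
  { unfold S. apply expbd_rsum. intros a Ha. destruct (darkb n a) eqn:Ea.
    - apply expbd_zero.
    - apply decay; auto. apply darkb_false; auto. }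
  assert (Hsplit : forall t, tr = 2 * FF n r 0 0 t + S t).
  { intros t. rewrite <- Htr. unfold N. rewrite <- (FF_trace n r t Hn). fold N. unfold S.
    rewrite (rsum_ext N (fun i => FF n r i i t) (fun a => (if (a =? 0)%nat then FF n r 0 0 t else 0)
       + (if (a =? N - 1)%nat then FF n r 0 0 t else 0) + (if darkb n a then 0 else FF n r a a t))).
    - rewrite !rsum_plus. rewrite (rsum_single N _ 0) by (try lia; intros a Ha Hne;
        replace (a =? 0)%nat with false by (symmetry; apply Nat.eqb_neq; auto); auto).
      rewrite (rsum_single N (fun a => if (a =? N - 1)%nat then _ else 0) (N - 1)) by (try lia; intros a Ha Hne;
        replace (a =? N - 1)%nat with false by (symmetry; apply Nat.eqb_neq; auto); auto).
      rewrite !Nat.eqb_refl. ring.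
    - intros a Ha. destruct (darkb n a) eqn:Ea.
      + rewrite Hdd by auto. rewrite Hdd' by auto.
        unfold darkb in Ea. fold N in Ea. apply orb_true_iff in Ea.
        destruct Ea as [Ea|Ea]; rewrite Ea; apply Nat.eqb_eq in Ea;
          [replace (a =? N - 1)%nat with false by (symmetry; apply Nat.eqb_neq; lia)
          |replace (a =? 0)%nat with false by (symmetry; apply Nat.eqb_neq; lia)]; ring.
      + unfold darkb in Ea. apply orb_false_iff in Ea. destruct Ea as [E1 E2]. fold N in E2.
        rewrite E1, E2. ring. }
  destruct (expbd_lim S HS (2 * eps) ltac:(lra)) as [T HT]. exists T. intros t Ht.
  rewrite Hdd by auto. rewrite Hdd' by auto. rewrite (Hsplit t).
  replace (FF n r 0 0 t - (2 * FF n r 0 0 t + S t) / 2) with (- (S t) / 2) by field.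
  unfold Rdiv. rewrite Rabs_mult, Rabs_Ropp, (Rabs_right (/2)) by lra.
  specialize (HT t Ht). lra.
Qed.

Lemma Rlim_eq u l : Un_cv u l -> Rlim u = l.
Proof.
  intros H. unfold Rlim. apply (UL_sequence u).
  apply (epsilon_spec (inhabits 0) (fun l => Un_cv u l)). exists l; auto. auto.
Qed.

Lemma evol_Re n t rho i j : (i < 2^n)%nat -> (j < 2^n)%nat ->
  Re (evol n t rho i j) = FF n (fun a b => Re (rho a b)) i j t.
Proof.
  intros Hi Hj. unfold evol; simpl. apply Rlim_eq.
  intros eps Heps. destruct (FF_Un_cv n (fun a b => Re (rho a b)) i j t Hi Hj eps Heps) as [N0 HN].
  exists N0. intros m Hm. rewrite (sum_eq _ (fun m => t ^ m / INR (fact m) * aa n (fun a b => Re (rho a b)) m i j)).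
  apply HN; auto. intros k _. unfold aa. rewrite Lpow_Re; auto.
Qed.

Lemma evol_Im n t rho i j : (i < 2^n)%nat -> (j < 2^n)%nat ->
  Im (evol n t rho i j) = FF n (fun a b => Im (rho a b)) i j t.
Proof.
  intros Hi Hj. unfold evol; simpl. apply Rlim_eq.
  intros eps Heps. destruct (FF_Un_cv n (fun a b => Im (rho a b)) i j t Hi Hj eps Heps) as [N0 HN].
  exists N0. intros m Hm. rewrite (sum_eq _ (fun m => t ^ m / INR (fact m) * aa n (fun a b => Im (rho a b)) m i j)).
  apply HN; auto. intros k _. unfold aa. rewrite Lpow_Im; auto.
Qed.

Lemma GHZ_Re n i j : Re (GHZ n i j) = if darkb n i && darkb n j then 1 / 2 else 0.
Proof.
  unfold GHZ, outer, psiGHZ, darkb. destruct ((i =? 0) || (i =? 2^n-1))%nat, ((j =? 0) || (j =? 2^n-1))%nat;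
  simpl; try ring.
  assert (Hs : sqrt 2 * sqrt 2 = 2) by (apply sqrt_sqrt; lra).
  assert (sqrt 2 <> 0) by (intro H; rewrite H in Hs; lra).
  replace (/ sqrt 2 * / sqrt 2) with (/ (sqrt 2 * sqrt 2)) by (field; auto). rewrite Hs. field.
Qed.

Lemma GHZ_Im n i j : Im (GHZ n i j) = 0.
Proof.
  unfold GHZ, outer, psiGHZ. destruct ((i =? 0) || (i =? 2^n-1))%nat, ((j =? 0) || (j =? 2^n-1))%nat;
  simpl; ring.
Qed.

Lemma Cmod_small (z : C) eps : 0 < eps -> Rabs (Re z) < eps / 2 -> Rabs (Im z) < eps / 2 -> Cmod z < eps.
Proof.
  intros He Hx Hy. unfold Cmod.
  rewrite <- (sqrt_pow2 eps) by lra. apply sqrt_lt_1_alt. split.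
  - apply Rplus_le_le_0_compat; apply pow2_ge_0.
  - rewrite <- (pow2_abs (Re z)), <- (pow2_abs (Im z)). pose proof (Rabs_pos (Re z)). pose proof (Rabs_pos (Im z)). nra.
Qed.

Theorem mainTheorem14 (n : nat) (Hn : (3 <= n)%nat) (rho0 : Mat)
  (Hrho : is_density (2 ^ n) rho0) (Hsupp : supported_in_Hprime n rho0) :
  forall eps : R, 0 < eps ->
    exists T : R, forall t : R, T <= t ->
      forall i j, (i < 2 ^ n)%nat -> (j < 2 ^ n)%nat ->
        Cmod (Cadd (evol n t rho0 i j) (Copp (GHZ n i j))) < eps.
Proof.
  intros eps Heps. destruct Hrho as [Hherm [_ Htr]].
  assert (Hn1 : (1 <= n)%nat) by lia.
  assert (HL : forall a b, (a < 2^n)%nat -> (b < 2^n)%nat -> rho0 (comp n a) b = rho0 a b).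
  { intros a b Ha Hb. rewrite <- Xn_mul by auto. apply Hsupp; auto. }
  assert (HR : forall a b, (a < 2^n)%nat -> (b < 2^n)%nat -> rho0 a (comp n b) = rho0 a b).
  { intros a b Ha Hb. rewrite Hherm by (auto; apply comp_lt). rewrite HL by auto.
    rewrite Hherm by auto. apply Cconj_conj. }
  assert (HtrR : rsum (2^n) (fun i => Re (rho0 i i)) = 1).
  { rewrite <- Re_Csum, Htr. reflexivity. }
  assert (HtrI : rsum (2^n) (fun i => Im (rho0 i i)) = 0).
  { rewrite <- Im_Csum, Htr. reflexivity. }
  assert (Heps2 : 0 < eps / 2) by lra.
  assert (Hent : forall i, (i < 2^n)%nat -> exists T, forall t, T <= t -> forall j, (j < 2^n)%nat ->
     Rabs (Re (evol n t rho0 i j) - Re (GHZ n i j)) < eps / 2 /\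
     Rabs (Im (evol n t rho0 i j) - Im (GHZ n i j)) < eps / 2).
  { intros i Hi. apply uniformT. intros j Hj.
    destruct (entry_lim n (fun a b => Re (rho0 a b)) 1 Hn1
      ltac:(intros; cbv beta; rewrite HL; auto) ltac:(intros; cbv beta; rewrite HR; auto) HtrR i j Hi Hj (eps/2) Heps2) as [T1 H1].
    destruct (entry_lim n (fun a b => Im (rho0 a b)) 0 Hn1
      ltac:(intros; cbv beta; rewrite HL; auto) ltac:(intros; cbv beta; rewrite HR; auto) HtrI i j Hi Hj (eps/2) Heps2) as [T2 H2].
    exists (Rmax T1 T2). intros t Ht. split.
    - rewrite evol_Re, GHZ_Re by auto. apply H1. apply Rle_trans with (Rmax T1 T2); [apply Rmax_l|auto].
    - rewrite evol_Im, GHZ_Im by auto. specialize (H2 t ltac:(apply Rle_trans with (Rmax T1 T2); [apply Rmax_r|auto])).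
      destruct (darkb n i && darkb n j); replace (0/2) with 0 in H2 by field; auto. }
  destruct (uniformT _ _ Hent) as [T HT]. exists T. intros t Ht i j Hi Hj.
  destruct (HT t Ht i Hi j Hj) as [Hre Him].
  apply Cmod_small; auto.
Qed.
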